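(* Let $a<b$ and let $f:[a,b]\rightarrow\mathbb{R}$ be a differentiable mapping in $(a,b)$ such that $f'\in L^1[a,b]$ and $\gamma\le f'(x)\le \Gamma$ for all $x\in [a,b]$, where $\gamma,\Gamma$ are real constants. Put $S=\frac{f(b)-f(a)}{b-a}$. Then \[ \left|\frac{f\left(\frac{3a+b}{4}\right)+f\left(\frac{a+3b}{4}\right)}{2} -\frac{1}{b-a}\int_{a}^{b}f(t)\,dt\right|\leq \frac{b-a}{4}(S-\gamma) \] and \[ \left|\frac{f\left(\frac{3a+b}{4}\right)+f\left(\frac{a+3b}{4}\right)}{2} -\frac{1}{b-a}\int_{a}^{b}f(t)\,dt\right|\leq \frac{b-a}{4}(\Gamma-S). \] *)

(* Defs.v *)
From HB Require Import structures.
From mathcomp Require Import all_boot all_order all_algebra.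
From mathcomp Require Import all_classical all_reals all_analysis.
Set Implicit Arguments. Unset Strict Implicit. Unset Printing Implicit Defensive.

(* Main.v *)
Require Import Defs.
From HB Require Import structures.
From mathcomp Require Import all_boot all_order all_algebra.
From mathcomp Require Import all_classical all_reals all_analysis.
Import Order.TTheory GRing.Theory Num.Theory.
Import numFieldNormedType.Exports.
Local Open Scope classical_set_scope.
Local Open Scope ring_scope.


Lemma isd_sq (R : realType) (t : R) : is_derive t 1 (fun x : R => x ^+ 2 / 2) t.
Proof.
have H : is_derive t 1 ((2:R)^-1 \*: (@id R ^+ 2)) ((2:R)^-1 *: ((2%:R * id t ^+ 1) *: 1)).
  by apply: is_deriveZ; apply: is_deriveX.
have -> : (fun x : R => x ^+ 2 / 2) = (2:R)^-1 \*: (@id R ^+ 2).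
  by apply/funext => x /=; rewrite mulrC.
apply: is_derive_eq H _.
by rewrite /= expr1 scalerA mulrA mulVf ?mul1r ?pnatr_eq0 // -[RHS]mulr1.
Qed.

Lemma int_id (R : realType) (x y : R) : x < y ->
  \int[@lebesgue_measure R]_(t in `[x, y]) t = (y ^+ 2 - x ^+ 2) / 2.
Proof.
move=> xy.
rewrite /Rintegral (@continuous_FTC2 _ _ (fun x : R => x ^+ 2 / 2))//=.
- by rewrite -mulrBl.
- by apply: continuous_in_subspaceT => z _; exact: cvg_id.
- have cF : continuous (fun x : R => x ^+ 2 / 2).
    move=> z; apply: differentiable_continuous.
    by apply/derivable1_diffP; have [] := @isd_sq R z.
  split.
  + by move=> z _; have [] := @isd_sq R z.
  + exact: cvg_at_right_filter (cF x).
  + exact: cvg_at_left_filter (cF y).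
- by move=> z _; rewrite derive1E (@derive_val _ _ _ _ _ _ _ (@isd_sq R z)).
Qed.

From mathcomp Require Import ring lra.

Lemma isd_lin (R : realType) (al be t : R) :
  is_derive t 1 (fun x : R => al * x + be * (x ^+ 2 / 2)) (al + be * t).
Proof.
have H := is_deriveD (is_deriveZ al (is_derive_id t 1)) (is_deriveZ be (@isd_sq R t)).
have -> : (fun x : R => al * x + be * (x ^+ 2 / 2)) =
   (al \*: (@id R)) + (be \*: (fun x : R => x ^+ 2 / 2)) by apply/funext.
by apply: is_derive_eq H _; rewrite /= -[al in RHS]mulr1.
Qed.

Lemma int_lin (R : realType) (x y al be : R) : x < y ->
  \int[@lebesgue_measure R]_(t in `[x, y]) (al + be * t) =
  al * (y - x) + be * ((y ^+ 2 - x ^+ 2) / 2).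
Proof.
move=> xy.
rewrite /Rintegral (@continuous_FTC2 _ _ (fun x : R => al * x + be * (x ^+ 2 / 2)))//=.
- by ring.
- apply: continuous_in_subspaceT => z _.
  apply: continuousD; first exact: cst_continuous.
  by apply: continuousM; [exact: cst_continuous| exact: cvg_id].
- have cF : continuous (fun x : R => al * x + be * (x ^+ 2 / 2)).
    move=> z; apply: differentiable_continuous.
    by apply/derivable1_diffP; have [] := @isd_lin R al be z.
  split.
  + by move=> z _; have [] := @isd_lin R al be z.
  + exact: cvg_at_right_filter (cF x).
  + exact: cvg_at_left_filter (cF y).
- by move=> z _; rewrite derive1E (@derive_val _ _ _ _ _ _ _ (@isd_lin R al be z)).
Qed.

Lemma cont_int (R : realType) (x y : R) (f : R -> R) :
  {within `[x, y], continuous f} ->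
  (@lebesgue_measure R).-integrable `[x, y] (EFin \o f).
Proof. by move=> cf; apply: continuous_compact_integrable => //; exact: segment_compact. Qed.

Lemma split_int (R : realType) (x z y : R) (f : R -> R) :
  x <= z -> z <= y -> {within `[x, y], continuous f} ->
  \int[@lebesgue_measure R]_(t in `[x, y]) f t =
  \int[@lebesgue_measure R]_(t in `[x, z]) f t + \int[@lebesgue_measure R]_(t in `[z, y]) f t.
Proof.
move=> xz zy cf.
have := @Rintegral_itvB R f (BLeft x) (BRight y) z (@cont_int R _ _ _ cf).
rewrite !bnd_simp => /(_ xz zy) H.
rewrite Rintegral_itv_obnd_cbnd in H; last first.
  apply: integrableS (@cont_int R _ _ _ cf) => //; apply: subset_itv; rewrite bnd_simp //.
by rewrite -H addrC subrK.
Qed.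

Lemma piece (R : realType) (x y c : R) (f : R -> R) :
  x < y -> {within `[x, y], continuous f} ->
  (forall u v, x <= u -> u <= v -> v <= y -> c * (v - u) <= f v - f u) ->
  f x * (y - x) + c * ((y - x) ^+ 2 / 2) <= \int[@lebesgue_measure R]_(t in `[x, y]) f t /\
  \int[@lebesgue_measure R]_(t in `[x, y]) f t <= f y * (y - x) - c * ((y - x) ^+ 2 / 2).
Proof.
move=> xy cf Hc.
have clin : forall al be : R, {within `[x, y], continuous (fun t : R => al + be * t)}.
  move=> al be; apply: continuous_in_subspaceT => z _.
  apply: continuousD; first exact: cst_continuous.
  by apply: continuousM; [exact: cst_continuous| exact: cvg_id].
split.
- have -> : f x * (y - x) + c * ((y - x) ^+ 2 / 2) =
     \int[@lebesgue_measure R]_(t in `[x, y]) ((f x - c * x) + c * t).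
    by rewrite int_lin //; field.
  apply: le_Rintegral => //.
  + exact: (@cont_int R _ _ _ (clin _ _)).
  + exact: (@cont_int R _ _ _ cf).
  + move=> t; rewrite /= in_itv /= => /andP[xt ty].
    have := Hc x t (lexx x) xt ty; lra.
- have -> : f y * (y - x) - c * ((y - x) ^+ 2 / 2) =
     \int[@lebesgue_measure R]_(t in `[x, y]) ((f y - c * y) + c * t).
    by rewrite int_lin //; field.
  apply: le_Rintegral => //.
  + exact: (@cont_int R _ _ _ cf).
  + exact: (@cont_int R _ _ _ (clin _ _)).
  + move=> t; rewrite /= in_itv /= => /andP[xt ty].
    have := Hc t y xt ty (lexx y); lra.
Qed.

Lemma divlo (R : realType) (h u v w : R) : 0 < h ->
  u * h + w * (h ^+ 2 / 2) <= v -> u + w * h / 2 <= v / h.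
Proof.
move=> h0 H; rewrite ler_pdivlMr //.
have -> : (u + w * h / 2) * h = u * h + w * (h ^+ 2 / 2) by field.
exact: H.
Qed.

Lemma divhi (R : realType) (h u v w : R) : 0 < h ->
  v <= u * h - w * (h ^+ 2 / 2) -> v / h <= u - w * h / 2.
Proof.
move=> h0 H; rewrite ler_pdivrMr //.
have -> : (u - w * h / 2) * h = u * h - w * (h ^+ 2 / 2) by field.
exact: H.
Qed.

Lemma key (R : realType) (a b c : R) (f : R -> R) :
  a < b -> {within `[a, b], continuous f} ->
  (forall u v, a <= u -> u <= v -> v <= b -> c * (v - u) <= f v - f u) ->
  `|(f ((3 * a + b) / 4) + f ((a + 3 * b) / 4)) / 2
     - (b - a)^-1 * \int[@lebesgue_measure R]_(t in `[a, b]) f t|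
  <= (b - a) / 4 * ((f b - f a) / (b - a) - c).
Proof.
move=> ab cf Hc.
set h := (b - a) / 4.
have h0 : 0 < h by rewrite /h divr_gt0 // ?subr_gt0.
have hn0 : h != 0 by rewrite gt_eqF.
set p := a + h; set m := p + h; set q := m + h.
have eb : b = q + h by rewrite /q /m /p /h; field.
have ep : (3 * a + b) / 4 = p by rewrite /p /h; field.
have eq' : (a + 3 * b) / 4 = q by rewrite /q /m /p /h; field.
rewrite ep eq'.
have ap : a <= p by rewrite /p lerDl ltW.
have pm : p <= m by rewrite /m lerDl ltW.
have mq : m <= q by rewrite /q lerDl ltW.
have qb : q <= b by rewrite eb lerDl ltW.
have sub : forall x y, a <= x -> y <= b -> {within `[x, y], continuous f}.
  move=> x y ax yb; apply: (continuous_subspaceW _ cf); apply: subset_itv; rewrite bnd_simp //.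
have Hc' : forall x y, a <= x -> y <= b -> (forall u v, x <= u -> u <= v -> v <= y -> c * (v - u) <= f v - f u).
  move=> x y ax yb u v xu uv vy; apply: Hc => //; [exact: le_trans xu|exact: le_trans yb].
have E : \int[@lebesgue_measure R]_(t in `[a, b]) f t =
   \int[@lebesgue_measure R]_(t in `[a, p]) f t + \int[@lebesgue_measure R]_(t in `[p, m]) f t
 + \int[@lebesgue_measure R]_(t in `[m, q]) f t + \int[@lebesgue_measure R]_(t in `[q, b]) f t.
  have am : a <= m by exact: le_trans ap pm.
  have aq : a <= q by exact: le_trans am mq.
  have mb : m <= b by exact: le_trans mq qb.
  rewrite (@split_int R a q b f aq qb cf).
  rewrite (@split_int R a m q f am mq (sub _ _ (lexx a) qb)).
  by rewrite (@split_int R a p m f ap pm (sub _ _ (lexx a) mb)).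
have lt_h : forall x, x < x + h by move=> x; rewrite ltrDl.
have dh : forall x, x + h - x = h by move=> x; rewrite addrC addKr.
have am : a <= m by exact: le_trans ap pm.
have mb : m <= b by exact: le_trans mq qb.
have pb : p <= b by exact: le_trans pm mb.
have aq : a <= q by exact: le_trans am mq.
have [L1 U1] := @piece R a p c f (lt_h a) (sub _ _ (lexx a) pb) (Hc' _ _ (lexx a) pb).
have [L2 U2] := @piece R p m c f (lt_h p) (sub _ _ ap mb) (Hc' _ _ ap mb).
have [L3 U3] := @piece R m q c f (lt_h m) (sub _ _ am qb) (Hc' _ _ am qb).
have qlb : q < b by move: (lt_h q); rewrite -eb.
have [L4 U4] := @piece R q b c f qlb (sub _ _ aq (lexx b)) (Hc' _ _ aq (lexx b)).
have hp : p - a = h := dh a.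
have hm : m - p = h := dh p.
have hq : q - m = h := dh m.
have hb : b - q = h by rewrite /q /m /p /h; field.
rewrite hp in L1 U1; rewrite hm in L2 U2; rewrite hq in L3 U3; rewrite hb in L4 U4.
have J1l := @divlo R _ _ _ _ h0 L1; have J1u := @divhi R _ _ _ _ h0 U1.
have J2l := @divlo R _ _ _ _ h0 L2; have J2u := @divhi R _ _ _ _ h0 U2.
have J3l := @divlo R _ _ _ _ h0 L3; have J3u := @divhi R _ _ _ _ h0 U3.
have J4l := @divlo R _ _ _ _ h0 L4; have J4u := @divhi R _ _ _ _ h0 U4.
have C1 := Hc a p (lexx a) ap pb; rewrite hp in C1.
have C2 := Hc p m ap pm mb; rewrite hm in C2.
have C3 := Hc m q am mq qb; rewrite hq in C3.
have C4 := Hc q b aq qb (lexx b); rewrite hb in C4.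
have ba : b - a = 4 * h by rewrite /h; field.
rewrite E ba.
have -> : (4 * h)^-1 * (\int[@lebesgue_measure R]_(t in `[a, p]) f t + \int[@lebesgue_measure R]_(t in `[p, m]) f t
 + \int[@lebesgue_measure R]_(t in `[m, q]) f t + \int[@lebesgue_measure R]_(t in `[q, b]) f t) =
 (\int[@lebesgue_measure R]_(t in `[a, p]) f t / h + \int[@lebesgue_measure R]_(t in `[p, m]) f t / h
 + \int[@lebesgue_measure R]_(t in `[m, q]) f t / h + \int[@lebesgue_measure R]_(t in `[q, b]) f t / h) / 4.
  by field.

have -> : h * ((f b - f a) / (4 * h) - c) = (f b - f a) / 4 - c * h by field.
rewrite ler_norml; apply/andP; split; lra.
Qed.

Lemma mvt_bound (R : realType) (a b gamma Gamma : R) (f : R -> R) :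
  {within `[a, b], continuous f} ->
  (forall x, a < x < b -> derivable f x 1) ->
  (forall x, a < x < b -> gamma <= (derive1 f) x <= Gamma) ->
  forall u v, a <= u -> u <= v -> v <= b ->
  gamma * (v - u) <= f v - f u /\ f v - f u <= Gamma * (v - u).
Proof.
move=> cf df hg u v au; rewrite le_eqVlt => /predU1P[<- _|uv vb].
  by rewrite !subrr !mulr0.
have cuv : {within `[u, v], continuous f}.
  apply: (continuous_subspaceW _ cf); apply: subset_itv; rewrite bnd_simp //.
have sub : forall z, z \in `]u, v[ -> a < z < b.
  move=> z; rewrite in_itv /= => /andP[uz zv].
  by rewrite (le_lt_trans au uz) (lt_le_trans zv vb).
have D : forall z, z \in `]u, v[ -> is_derive z 1 f (derive1 f z).
  by move=> z /sub zab; rewrite derive1E; exact/derivableP/df.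
have [z /sub zab ->] := MVT uv D cuv.
have /andP[g1 g2] := hg z zab.
have vu : 0 <= v - u by rewrite subr_ge0 ltW.
by split; rewrite ler_wpM2r.
Qed.

Theorem corollary2p1 (R : realType) (a b gamma Gamma : R) (f : R -> R) :
  a < b ->
  {within `[a, b], continuous f} ->
  (forall x, a < x < b -> derivable f x 1) ->
  (@lebesgue_measure R).-integrable `[a, b] (EFin \o (derive1 f)) ->
  (forall x, a < x < b -> gamma <= (derive1 f) x <= Gamma) ->
  let S := (f b - f a) / (b - a) in
  let M := (f ((3 * a + b) / 4) + f ((a + 3 * b) / 4)) / 2
           - (b - a)^-1 * Rintegral (@lebesgue_measure R) `[a, b] f in
  `|M| <= (b - a) / 4 * (S - gamma) /\ `|M| <= (b - a) / 4 * (Gamma - S).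
Proof.
move=> ab cf df _ hg S M.
have B := @mvt_bound R _ _ _ _ _ cf df hg.
split.
  by apply: key => // u v au uv vb; have [] := B u v au uv vb.
have cnf : {within `[a, b], continuous (fun x => - f x)}.
  by move=> x; apply: continuousN; exact: cf.
have := @key R a b (- Gamma) (fun x => - f x) ab cnf.
have Hn : forall u v, a <= u -> u <= v -> v <= b -> - Gamma * (v - u) <= - f v - - f u.
  by move=> u v au uv vb; have [_ ?] := B u v au uv vb; lra.
move=> /(_ Hn).
have -> : \int[@lebesgue_measure R]_(t in `[a, b]) - f t = - \int[@lebesgue_measure R]_(t in `[a, b]) f t.
  rewrite -mulN1r -RintegralZl //; last exact: cont_int.
  by apply: eq_Rintegral => x _; rewrite mulN1r.
have -> : (- f ((3 * a + b) / 4) + - f ((a + 3 * b) / 4)) / 2 - (b - a)^-1 * - (\int[@lebesgue_measure R]_(t in `[a, b]) f t) = - M.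
  by rewrite /M; ring.
rewrite normrN.
have -> : (- f b - - f a) / (b - a) - - Gamma = Gamma - S by rewrite /S; ring.
done.
Qed.
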